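(* Assume the standing assumptions and, in addition, that $g$ is real-valued on all of $\mathbb{R}^m$ and differentiable with $\frac1\kappa$-Lipschitz continuous gradient for some $\kappa>0$ (so $\theta_\rho$ is $\kappa$-strongly convex). Suppose $(D)$ has an optimal solution $p^*$ (a minimizer of $\theta$). Let $\rho>0$ and let $(p_k)_{k\ge0}$ be generated by the fast gradient method applied to $\theta_\rho$. Then for all $k\ge0$, $$\theta(p_k)-\theta(p^* )\le\rho D_f+2\bigl(\theta(0)-\theta(p^* )+\rho D_f\bigr)e^{-k\sqrt{\kappa/L(\rho)}},$$ $$\|\nabla\theta_\rho(p_k)\|\le2\sqrt{L(\rho)\bigl(\theta(0)-\theta(p^* )+\rho D_f\bigr)}\,e^{-\frac k2\sqrt{\kappa/L(\rho)}} .$$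
   Context: Standing assumptions: $\mathcal{H}$ is a real Hilbert space; $f:\mathcal{H}\to\mathbb{R}\cup\{+\infty\}$ is proper, convex, lower semicontinuous with bounded effective domain; $g:\mathbb{R}^m\to\mathbb{R}\cup\{+\infty\}$ is proper, lower semicontinuous and $\mu$-strongly convex for some $\mu>0$; $A:\mathcal{H}\to\mathbb{R}^m$ is linear and continuous with $A(\operatorname{dom} f)\cap\operatorname{dom} g\neq\emptyset$. $(D)$ is $\sup_p\{-f^*(A^*p)-g^*(-p)\}$. $D_f:=\sup\{\tfrac12\|x\|^2:x\in\operatorname{dom} f\}$. $\theta(p):=f^*(A^*p)+g^*(-p)$. $f_\rho^*(q):=\sup_x\{\langle q,x\rangle-f(x)-\frac\rho2\|x\|^2\}$, $\theta_\rho(p):=f_\rho^*(A^*p)+g^*(-p)$, and $L(\rho):=\frac{\|A\|^2}{\rho}+\frac1\mu$ (a Lipschitz constant of $\nabla\theta_\rho$). Fast gradient method on $\theta_\rho$ with strong convexity parameter $\kappa$: $w_0=p_0=0$, $p_{k+1}=w_k-\frac{1}{L(\rho)}\nabla\theta_\rho(w_k)$, $w_{k+1}=p_{k+1}+\frac{\sqrt{L(\rho)}-\sqrt\kappa}{\sqrt{L(\rho)}+\sqrt\kappa}(p_{k+1}-p_k)$. *)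

(* Defs.v *)
From mathcomp Require Import ssreflect ssrbool eqtype ssrnat seq fintype.
From Stdlib Require Import Reals Lra Classical ClassicalEpsilon
  FunctionalExtensionality.
Open Scope R_scope.

Set Implicit Arguments.

Record PreHilbert := {
  pt :> Type;
  zero : pt;
  add : pt -> pt -> pt;
  opp : pt -> pt;
  scal : R -> pt -> pt;
  inner : pt -> pt -> R;
  add_assoc : forall x y z, add x (add y z) = add (add x y) z;
  add_comm : forall x y, add x y = add y x;
  add_0_l : forall x, add zero x = x;
  add_opp_r : forall x, add x (opp x) = zero;
  scal_1 : forall x, scal 1 x = x;
  scal_assoc : forall a b x, scal a (scal b x) = scal (a * b) x;
  scal_distr_l : forall a x y, scal a (add x y) = add (scal a x) (scal a y);
  scal_distr_r : forall a b x, scal (a + b) x = add (scal a x) (scal b x);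
  inner_sym : forall x y, inner x y = inner y x;
  inner_add_l : forall x y z, inner (add x y) z = inner x z + inner y z;
  inner_scal_l : forall a x y, inner (scal a x) y = a * inner x y;
  inner_pos : forall x, 0 <= inner x x;
  inner_def : forall x, inner x x = 0 -> x = zero
}.
Arguments zero {_}.
Arguments add {_} _ _.
Arguments opp {_} _.
Arguments scal {_} _ _.
Arguments inner {_} _ _.

Definition sub {V : PreHilbert} (x y : V) : V := add x (opp y).
Definition norm {V : PreHilbert} (x : V) : R := sqrt (inner x x).

Definition complete (V : PreHilbert) : Prop :=
  forall u : nat -> V,
    (forall eps, 0 < eps -> exists N, forall n k, (N <= n)%nat -> (N <= k)%nat ->
        norm (sub (u n) (u k)) < eps) ->
    exists l : V, forall eps, 0 < eps -> exists N, forall n, (N <= n)%nat ->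
        norm (sub (u n) l) < eps.

Definition is_Hilbert (V : PreHilbert) : Prop := complete V.

Definition lsum {I : Type} (l : seq I) (f : I -> R) : R :=
  foldr (fun i acc => f i + acc) 0 l.

Lemma lsum_add {I : Type} (l : seq I) f g :
  lsum l (fun i => f i + g i) = lsum l f + lsum l g.
Proof. rewrite /lsum; elim: l => [|a l IH] /=; [lra | rewrite IH; lra]. Qed.

Lemma lsum_scal {I : Type} (l : seq I) a f :
  lsum l (fun i => a * f i) = a * lsum l f.
Proof. rewrite /lsum; elim: l => [|b l IH] /=; [lra | rewrite IH; lra]. Qed.

Lemma lsum_pos {I : Type} (l : seq I) f :
  (forall i, 0 <= f i) -> 0 <= lsum l f.
Proof. move=> H; rewrite /lsum; elim: l => [|b l IH] /=; [lra | have := H b; lra]. Qed.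

Lemma lsum_zero {I : eqType} (l : seq I) f :
  (forall i, 0 <= f i) -> lsum l f = 0 -> forall i, i \in l -> f i = 0.
Proof.
move=> H; elim: l => [|b l IH] //= Hs i; rewrite in_cons.
have Hl := lsum_pos l f H.
rewrite /lsum /= -/(lsum l f) in Hs.
have Hb := H b.
case/orP => [/eqP -> | Hi]; first lra.
apply: IH => //; lra.
Qed.

Section Euclid.
Variable m : nat.
Definition Rm := 'I_m -> R.
Definition Rm_inner (u v : Rm) : R := lsum (enum 'I_m) (fun i => u i * v i).

Definition Euclid : PreHilbert.
refine (@Build_PreHilbert Rm (fun _ => 0) (fun u v i => u i + v i)
  (fun u i => - u i) (fun a u i => a * u i) Rm_inner _ _ _ _ _ _ _ _ _ _ _ _ _).
- move=> x y z; apply: functional_extensionality => i; lra.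
- move=> x y; apply: functional_extensionality => i; lra.
- move=> x; apply: functional_extensionality => i; lra.
- move=> x; apply: functional_extensionality => i; lra.
- move=> x; apply: functional_extensionality => i; lra.
- move=> a b x; apply: functional_extensionality => i; lra.
- move=> a x y; apply: functional_extensionality => i; lra.
- move=> a b x; apply: functional_extensionality => i; lra.
- move=> x y; rewrite /Rm_inner; f_equal; apply: functional_extensionality => i; lra.
- move=> x y z; rewrite /Rm_inner -lsum_add; f_equal;
    apply: functional_extensionality => i; lra.
- move=> a x y; rewrite /Rm_inner -lsum_scal; f_equal;
    apply: functional_extensionality => i; lra.
- move=> x; apply: lsum_pos => i; apply: Rle_0_sqr.
- move=> x H; apply: functional_extensionality => i.
  have := lsum_zero (enum 'I_m) (fun j => x j * x j) (fun j => Rle_0_sqr (x j)) H i.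
  rewrite mem_enum => /(_ isT) Hi. by apply: Rsqr_0_uniq.
Defined.
End Euclid.

(* Supremum of a set of reals (the least upper bound when the set is
   nonempty and bounded above; 0 otherwise -- never used in that case). *)
Definition Rsup (E : R -> Prop) : R :=
  match excluded_middle_informative (bound E /\ exists x, E x) with
  | left H => proj1_sig (completeness E (proj1 H) (proj2 H))
  | right _ => 0
  end.

Definition choose_or {T : Type} (d : T) (P : T -> Prop) : T :=
  match excluded_middle_informative (exists x, P x) with
  | left H => proj1_sig (constructive_indefinite_description P H)
  | right _ => d
  end.

(* Extended-real-valued functions V -> R ∪ {+oo}: None encodes +oo.   *)
Definition extfun (V : Type) := V -> option R.
Definition ext_of {V : Type} (g : V -> R) : extfun V := fun x => Some (g x).

Definition ext_dom {V : Type} (f : extfun V) (x : V) : Prop := exists v, f x = Some v.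
Definition proper {V : Type} (f : extfun V) : Prop := exists x, ext_dom f x.

Definition ext_gt (o : option R) (c : R) : Prop :=
  match o with None => True | Some v => c < v end.

Definition lsc {V : PreHilbert} (f : extfun V) : Prop :=
  forall c x, ext_gt (f x) c ->
    exists d, 0 < d /\ forall y, norm (sub y x) < d -> ext_gt (f y) c.

Definition comb {V : PreHilbert} (t : R) (x y : V) : V :=
  add (scal t x) (scal (1 - t) y).

Definition strongly_convex {V : PreHilbert} (mu : R) (f : extfun V) : Prop :=
  forall x y t vx vy, 0 <= t <= 1 -> f x = Some vx -> f y = Some vy ->
    exists v, f (comb t x y) = Some v /\
      v <= t * vx + (1 - t) * vy - mu / 2 * t * (1 - t) * (norm (sub x y)) ^ 2.
Definition convex {V : PreHilbert} (f : extfun V) : Prop := strongly_convex 0 f.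

Definition bounded_dom {V : PreHilbert} (f : extfun V) : Prop :=
  exists M, forall x, ext_dom f x -> norm x <= M.

Definition linear_map {V W : PreHilbert} (A : V -> W) : Prop :=
  (forall x y, A (add x y) = add (A x) (A y)) /\
  (forall a x, A (scal a x) = scal a (A x)).
Definition continuous_map {V W : PreHilbert} (A : V -> W) : Prop :=
  forall x eps, 0 < eps -> exists d, 0 < d /\
    forall y, norm (sub y x) < d -> norm (sub (A y) (A x)) < eps.

Definition opnorm {V W : PreHilbert} (A : V -> W) : R :=
  Rsup (fun r => exists x, norm x <= 1 /\ r = norm (A x)).

Definition adjoint {V W : PreHilbert} (A : V -> W) (p : W) : V :=
  choose_or zero (fun y => forall x, inner y x = inner p (A x)).

Definition is_gradient_at {V : PreHilbert} (F : V -> R) (x v : V) : Prop :=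
  forall eps, 0 < eps -> exists d, 0 < d /\ forall h, norm h < d ->
    Rabs (F (add x h) - F x - inner v h) <= eps * norm h.
Definition grad {V : PreHilbert} (F : V -> R) (x : V) : V :=
  choose_or zero (is_gradient_at F x).

(* Fenchel conjugate of an R ∪ {+oo}-valued function (finite in all uses) *)
Definition fconj {V : PreHilbert} (f : extfun V) (q : V) : R :=
  Rsup (fun r => exists x v, f x = Some v /\ r = inner q x - v).

Definition conj_rho {V : PreHilbert} (rho : R) (f : extfun V) (q : V) : R :=
  Rsup (fun r => exists x v, f x = Some v /\
                   r = inner q x - v - rho / 2 * (norm x) ^ 2).

Definition D_f_const {V : PreHilbert} (f : extfun V) : R :=
  Rsup (fun r => exists x, ext_dom f x /\ r = / 2 * (norm x) ^ 2).

Definition theta {H E : PreHilbert} (f : extfun H) (g : extfun E) (A : H -> E)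
  (p : E) : R := fconj f (adjoint A p) + fconj g (opp p).
Definition theta_rho {H E : PreHilbert} (rho : R) (f : extfun H) (g : extfun E)
  (A : H -> E) (p : E) : R := conj_rho rho f (adjoint A p) + fconj g (opp p).

Definition Lrho {H E : PreHilbert} (A : H -> E) (mu rho : R) : R :=
  (opnorm A) ^ 2 / rho + / mu.

Fixpoint fgm {E : PreHilbert} (F : E -> R) (L kappa : R) (k : nat) : E * E :=
  match k with
  | O => (zero, zero)
  | S k' =>
      let (p, w) := fgm F L kappa k' in
      let p' := sub w (scal (/ L) (grad F w)) in
      (p', add p' (scal ((sqrt L - sqrt kappa) / (sqrt L + sqrt kappa)) (sub p' p)))
  end.

(* Main.v *)
From mathcomp Require Import ssreflect ssrbool eqtype ssrnat seq fintype.
Require Import Defs.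
From Stdlib Require Import Reals Lra Psatz ClassicalEpsilon FunctionalExtensionality PropExtensionality.
Open Scope R_scope.

Set Implicit Arguments.
Unset Strict Implicit.

Arguments add_assoc {_} _ _ _.
Arguments add_comm {_} _ _.
Arguments add_0_l {_} _.
Arguments add_opp_r {_} _.
Arguments scal_1 {_} _.
Arguments scal_assoc {_} _ _ _.
Arguments scal_distr_l {_} _ _ _.
Arguments scal_distr_r {_} _ _ _.
Arguments inner_sym {_} _ _.
Arguments inner_add_l {_} _ _ _.
Arguments inner_scal_l {_} _ _ _.
Arguments inner_pos {_} _.
Arguments inner_def {_} _ _.

Section Alg.
Variable V : PreHilbert.
Implicit Types x y z : V.

Lemma inner_add_r x y z : inner x (add y z) = inner x y + inner x z.
Proof. rewrite inner_sym inner_add_l (inner_sym y) (inner_sym z); lra. Qed.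
Lemma inner_scal_r a x y : inner x (scal a y) = a * inner x y.
Proof. rewrite inner_sym inner_scal_l (inner_sym y); lra. Qed.
Lemma inner_zero_l x : inner zero x = 0.
Proof. have := inner_add_l zero zero x. rewrite add_0_l. lra. Qed.
Lemma inner_zero_r x : inner x zero = 0.
Proof. rewrite inner_sym; apply inner_zero_l. Qed.
Lemma inner_opp_l x y : inner (opp x) y = - inner x y.
Proof. have := inner_add_l x (opp x) y. rewrite add_opp_r inner_zero_l. lra. Qed.
Lemma inner_opp_r x y : inner x (opp y) = - inner x y.
Proof. rewrite inner_sym inner_opp_l inner_sym; lra. Qed.

Lemma add_0_r x : add x zero = x.
Proof. by rewrite add_comm add_0_l. Qed.

Lemma add_sub x y : add x (sub y x) = y.
Proof.
rewrite /sub (add_comm y) add_assoc add_opp_r add_0_l //.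
Qed.
Lemma sub_add x y : sub (add x y) y = x.
Proof. rewrite /sub -add_assoc add_opp_r add_0_r //. Qed.

Lemma sub_eq0 x y : sub x y = zero -> x = y.
Proof. move=> H. rewrite -(add_sub y x) H add_0_r //. Qed.

Lemma norm_sq x : norm x ^ 2 = inner x x.
Proof. rewrite /norm /= Rmult_1_r sqrt_sqrt //; apply inner_pos. Qed.
Lemma norm_nonneg x : 0 <= norm x.
Proof. apply sqrt_pos. Qed.
Lemma norm_zero_eq x : norm x = 0 -> x = zero.
Proof. move=> H. apply inner_def. rewrite -norm_sq H; lra. Qed.
Lemma norm_zero : norm (zero : V) = 0.
Proof. rewrite /norm inner_zero_l sqrt_0 //. Qed.

Lemma cauchy_schwarz x y : Rabs (inner x y) <= norm x * norm y.
Proof.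
have Hx := inner_pos x; have Hy := inner_pos y.
suff H2 : (inner x y)^2 <= inner x x * inner y y.
  rewrite -sqrt_Rsqr_abs /norm -sqrt_mult_alt //.
  apply sqrt_le_1_alt. rewrite /Rsqr. nra.
case: (Req_dec (inner y y) 0) => Hy0.
  have -> : y = zero by apply inner_def. rewrite !inner_zero_r; nra.
have H := inner_pos (add x (scal (- (inner x y / inner y y)) y)).
rewrite inner_add_l !inner_add_r !inner_scal_l !inner_scal_r (inner_sym y x) in H.
have Hp : 0 < inner y y by lra.
set c := inner x y in H *. set d := inner y y in H Hp *.
have E : 0 <= inner x x * d - c ^ 2.
  have -> : inner x x * d - c^2 = d * (inner x x + - (c / d) * c + (- (c / d) * c + - (c / d) * (- (c / d) * d))) by field; lra.
  apply Rmult_le_pos; lra.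
lra.
Qed.

Lemma inner_le_norm x y : inner x y <= norm x * norm y.
Proof. have := cauchy_schwarz x y. have := Rle_abs (inner x y). lra. Qed.

Lemma norm_scal a x : norm (scal a x) = Rabs a * norm x.
Proof.
rewrite /norm inner_scal_l inner_scal_r -Rmult_assoc sqrt_mult_alt.
  rewrite -sqrt_Rsqr_abs /Rsqr //.
apply Rle_0_sqr.
Qed.

Lemma norm_opp x : norm (opp x) = norm x.
Proof. rewrite /norm inner_opp_l inner_opp_r; f_equal; ring. Qed.

Lemma norm_triangle x y : norm (add x y) <= norm x + norm y.
Proof.
apply Rsqr_incr_0_var; last by apply Rplus_le_le_0_compat; apply norm_nonneg.
rewrite /Rsqr. have -> : norm (add x y) * norm (add x y) = norm (add x y)^2 by ring.
rewrite norm_sq inner_add_l !inner_add_r (inner_sym y x).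
have := inner_le_norm x y. have := norm_sq x. have := norm_sq y. nra.
Qed.

Lemma norm_sub_sym x y : norm (sub x y) = norm (sub y x).
Proof. rewrite /norm /sub !inner_add_l !inner_add_r !inner_opp_l !inner_opp_r (inner_sym y x); f_equal; ring. Qed.

End Alg.

#[global] Hint Rewrite @inner_add_l @inner_add_r @inner_scal_l @inner_scal_r
  @inner_opp_l @inner_opp_r @inner_zero_l @inner_zero_r : ip.
Ltac ipexp := unfold sub, comb in *; autorewrite with ip.

Set Implicit Arguments.
Unset Strict Implicit.

Lemma Rsup_spec E : bound E -> (exists x, E x) -> is_lub E (Rsup E).
Proof.
move=> Hb He. rewrite /Rsup.
case: (excluded_middle_informative _) => [Hc|Hc]; last by exfalso; apply Hc.
by case: (completeness _ _ _).
Qed.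
Lemma Rsup_ub E x : bound E -> E x -> x <= Rsup E.
Proof. move=> Hb Hx. have [H1 _] := Rsup_spec Hb (ex_intro _ x Hx). by apply H1. Qed.
Lemma Rsup_lub E B : (exists x, E x) -> (forall x, E x -> x <= B) -> Rsup E <= B.
Proof. move=> He HB. have [_ H2] := Rsup_spec (ex_intro _ B HB) He. by apply H2. Qed.
Lemma Rsup_max E a : E a -> (forall x, E x -> x <= a) -> Rsup E = a.
Proof.
move=> Ha HB. apply Rle_antisym. apply Rsup_lub => //; by exists a.
apply Rsup_ub => //; by exists a.
Qed.

Lemma lt_of_sq (V : PreHilbert) (z : V) d : 0 < d -> norm z ^ 2 < d ^ 2 -> norm z < d.
Proof. move=> Hd H. have := norm_nonneg z. nra. Qed.

Lemma norm_small_eps e : 0 < e -> exists N : nat, forall k, (N <= k)%nat -> / (INR k + 1) < e.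
Proof.
move=> He. have [N [HN HN0]] := archimed_cor1 e He. exists N => k Hk.
have HNk : INR N <= INR k by apply le_INR; apply/leP.
have HN0' : 0 < INR N by apply lt_0_INR; exact HN0.
apply Rle_lt_trans with (/ INR N) => //. apply Rinv_le_contravar; lra.
Qed.

Section Gen.
Variable V : PreHilbert.
Implicit Types x y z q : V.

Definition addc (f : extfun V) (c : V -> R) : extfun V :=
  fun x => match f x with Some v => Some (v + c x) | None => None end.
Definition contf (c : V -> R) := forall x eps, 0 < eps -> exists d, 0 < d /\
  forall y, norm (sub y x) < d -> Rabs (c y - c x) < eps.

Lemma lsc_addc f c : lsc f -> contf c -> lsc (addc f c).
Proof.
move=> Hf Hc C x. rewrite /addc => H.
have [a [eta [Heta [Ha Hae]]]] : exists a eta, 0 < eta /\ ext_gt (f x) a /\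
    forall v, a < v -> forall w, c x - eta < w -> C < v + w.
  move: H; case: (f x) => [v|] /= H.
  - exists (v - (v + c x - C) / 2), ((v + c x - C)/2). repeat split; try lra.
    move=> v' H1 w H2. lra.
  - exists (C - c x + 1), 1. repeat split; try lra. move=> v' H1 w H2; lra.
have [d1 [Hd1 H1]] := Hf a x Ha.
have [d2 [Hd2 H2]] := Hc x eta Heta.
exists (Rmin d1 d2). split; first by apply Rmin_pos.
move=> y Hy. have Hy1 : norm (sub y x) < d1 by have := Rmin_l d1 d2; lra.
have Hy2 : norm (sub y x) < d2 by have := Rmin_r d1 d2; lra.
have := H1 y Hy1. have := H2 y Hy2.
case: (f y) => [v|] //= Hcy Hv. apply Hae => //.
have := Rabs_def2 _ _ Hcy. lra.
Qed.

Lemma proper_addc f c : proper f -> proper (addc f c).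
Proof. move=> [x [v Hv]]. exists x. rewrite /ext_dom /addc Hv. by eexists. Qed.

Lemma sc_addc mu nu f c : strongly_convex mu f ->
  (forall x y t, 0 <= t <= 1 -> c (comb t x y) <= t * c x + (1 - t) * c y - nu / 2 * t * (1 - t) * norm (sub x y) ^ 2) ->
  strongly_convex (mu + nu) (addc f c).
Proof.
move=> Hf Hc x y t vx vy Ht. rewrite /addc.
case Ex: (f x) => [ux|] //; case Ey: (f y) => [uy|] // [<-] [<-].
have [v [Hv Hle]] := Hf x y t ux uy Ht Ex Ey.
exists (v + c (comb t x y)). rewrite Hv. split => //.
have := Hc x y t Ht. lra.
Qed.

Lemma contf_opp c : contf c -> contf (fun x => - c x).
Proof.
move=> H x e He. have [d [Hd Hy]] := H x e He. exists d; split => // y Hy'.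
have E : - c y - - c x = - (c y - c x) by ring. rewrite E Rabs_Ropp. by apply Hy.
Qed.

Lemma contf_inner q : contf (fun x => inner q x).
Proof.
move=> x e He. exists (e / (norm q + 1)). split.
  apply Rdiv_lt_0_compat => //; have := norm_nonneg q; lra.
move=> y Hy. have -> : inner q y - inner q x = inner q (sub y x) by rewrite /sub inner_add_r inner_opp_r; ring.
apply Rle_lt_trans with (norm q * norm (sub y x)); first by apply cauchy_schwarz.
have Hq := norm_nonneg q. have Hs := norm_nonneg (sub y x).
have : norm (sub y x) * (norm q + 1) < e.
  have -> : e = e / (norm q + 1) * (norm q + 1) by field; lra.
  apply Rmult_lt_compat_r; lra.
nra.
Qed.

Lemma norm_diff x y : Rabs (norm y - norm x) <= norm (sub y x).
Proof.
have H1 : norm y <= norm x + norm (sub y x) by rewrite -{1}(add_sub x y); apply norm_triangle.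
have H2 : norm x <= norm y + norm (sub x y) by rewrite -{1}(add_sub y x); apply norm_triangle.
rewrite norm_sub_sym in H2. apply Rabs_le. lra.
Qed.

Lemma contf_normsq a : contf (fun x => a * norm x ^ 2).
Proof.
move=> x e He. set K := (2 * norm x + 1) * (Rabs a + 1).
have HK : 0 < K by rewrite /K; have := norm_nonneg x; have := Rabs_pos a; nra.
exists (Rmin 1 (e / K)). split. apply Rmin_pos; [lra|apply Rdiv_lt_0_compat => //].
move=> y Hy. have Hy1 : norm (sub y x) < 1 by have := Rmin_l 1 (e/K); lra.
have Hy2 : norm (sub y x) < e / K by have := Rmin_r 1 (e/K); lra.
have Hd := norm_diff x y. have Hx := norm_nonneg x. have Hyn := norm_nonneg y.
have -> : a * norm y ^ 2 - a * norm x ^ 2 = a * ((norm y - norm x) * (norm y + norm x)) by ring.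
rewrite Rabs_mult Rabs_mult.
have Hs : Rabs (norm y + norm x) <= 2 * norm x + 1.
  rewrite Rabs_right; last lra. have := Rle_abs (norm y - norm x). lra.
have Hd' : Rabs (norm y - norm x) < e / K by lra.
have Ha := Rabs_pos a. have Hn1 := Rabs_pos (norm y - norm x).
have : Rabs (norm y - norm x) * K < e.
  have -> : e = e / K * K by field; lra. apply Rmult_lt_compat_r; lra.
have Hs0 := Rabs_pos (norm y + norm x).
have E1 : Rabs (norm y - norm x) * Rabs (norm y + norm x) <= Rabs (norm y - norm x) * (2 * norm x + 1).
  apply Rmult_le_compat_l => //.
have E2 : Rabs a * (Rabs (norm y - norm x) * Rabs (norm y + norm x)) <=
   (Rabs a + 1) * (Rabs (norm y - norm x) * (2 * norm x + 1)).
  apply Rmult_le_compat; try lra. apply Rmult_le_pos => //.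
have E3 : (Rabs a + 1) * (Rabs (norm y - norm x) * (2 * norm x + 1)) = Rabs (norm y - norm x) * K.
  rewrite /K; ring.
lra.
Qed.

Lemma contf_plus c1 c2 : contf c1 -> contf c2 -> contf (fun x => c1 x + c2 x).
Proof.
move=> H1 H2 x e He. have [d1 [Hd1 K1]] := H1 x (e/2) ltac:(lra).
have [d2 [Hd2 K2]] := H2 x (e/2) ltac:(lra).
exists (Rmin d1 d2); split; first by apply Rmin_pos.
move=> y Hy. have := K1 y ltac:(have := Rmin_l d1 d2; lra).
have := K2 y ltac:(have := Rmin_r d1 d2; lra).
have -> : c1 y + c2 y - (c1 x + c2 x) = (c1 y - c1 x) + (c2 y - c2 x) by ring.
have := Rabs_triang (c1 y - c1 x) (c2 y - c2 x). lra.
Qed.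

Lemma norm_comb_x0 t y x0 : norm (sub (comb t y x0) x0) ^ 2 = t ^ 2 * norm (sub y x0) ^ 2.
Proof. rewrite !norm_sq. ipexp. rewrite !(inner_sym x0 y). ring. Qed.

Lemma norm_comb_sq t x y : norm (comb t x y) ^ 2 =
  t * norm x ^ 2 + (1 - t) * norm y ^ 2 - t * (1 - t) * norm (sub x y) ^ 2.
Proof. rewrite !norm_sq. ipexp. rewrite !(inner_sym y x). ring. Qed.

Theorem minimizer F mu : complete V -> 0 < mu -> strongly_convex mu F -> lsc F -> proper F ->
  exists x0 v0, F x0 = Some v0 /\ forall x v, F x = Some v -> v0 <= v.
Proof.
move=> Hcomp Hmu Hsc Hlsc [x0 [a Ha]].
have [d [Hd Hball]] := Hlsc (a - 1) x0 ltac:(rewrite Ha /=; lra).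
set K := a - 1 - 4 / (mu * d ^ 2).
have HK : 0 < 4 / (mu * d^2) by apply Rdiv_lt_0_compat; [lra| apply Rmult_lt_0_compat; [lra|apply pow_lt; lra]].
have Hlow : forall y b, F y = Some b -> K <= b.
  move=> y b Hb. set r := norm (sub y x0).
  case: (Rlt_le_dec r d) => Hr.
    have := Hball y Hr. rewrite Hb /=. rewrite /K. lra.
  set t := d / (2 * r).
  have Hr0 : 0 < r by lra.
  have Ht : 0 < t <= 1/2.
    split; first by apply Rdiv_lt_0_compat; lra.
    rewrite /t. apply Rmult_le_reg_r with (2 * r); first lra.
    have -> : d / (2 * r) * (2 * r) = d by field; lra. lra.
  have [w [Hw Hwle]] := Hsc y x0 t b a ltac:(lra) Hb Ha.
  have Hn : norm (sub (comb t y x0) x0) < d.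
    apply lt_of_sq => //. rewrite norm_comb_x0 -/r.
    have -> : t ^ 2 * r ^ 2 = (d / 2) ^ 2 by rewrite /t; field; lra. nra.
  have := Hball _ Hn. rewrite Hw /= => Hw'.
  have Htr : t * r = d / 2 by rewrite /t; field; lra.
  rewrite -/r in Hwle. have H1 : t * (b - a) > -1 + mu / 2 * t * (1 - t) * r ^ 2 by lra.
  have H2 : b - a > - (2 * r / d) + mu / 4 * r ^ 2.
    have Hinv : / t = 2 * r / d by rewrite /t; field; lra.
    have : b - a > / t * (-1 + mu / 2 * t * (1 - t) * r ^ 2).
      apply Rmult_gt_reg_l with t; first lra.
      rewrite -Rmult_assoc Rinv_r; lra.
    rewrite Hinv. have -> : 2 * r / d * (-1 + mu / 2 * t * (1 - t) * r ^ 2) =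
       - (2 * r / d) + mu / 2 * (1 - t) * r ^ 2 * (2 * r / d * t) by ring.
    have -> : 2 * r / d * t = 1 by rewrite /t; field; lra.
    have Hr2 := pow2_ge_0 r. have : 0 <= mu * r^2 * (1/2 - t) by apply Rmult_le_pos; [apply Rmult_le_pos; lra | lra]. lra.
  have H3 : - (2 * r / d) + mu / 4 * r ^ 2 >= - (4 / (mu * d ^ 2)).
    have E : - (2 * r / d) + mu / 4 * r ^ 2 + 4 / (mu * d ^ 2) = mu / 4 * (r - 4 / (mu * d)) ^ 2.
      field; lra.
    have : 0 <= mu / 4 * (r - 4 / (mu * d)) ^ 2 by apply Rmult_le_pos; [lra| apply pow2_ge_0]. lra.
  rewrite /K; lra.
set E := fun r => exists x v, F x = Some v /\ r = - v.
have Eb : bound E. exists (- K) => r [x [v [Hv ->]]]. have := Hlow _ _ Hv; lra.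
have Ene : exists r, E r by exists (- a), x0, a.
set I := - Rsup E.
have HI : forall x v, F x = Some v -> I <= v.
  move=> x v Hv. have HE : E (- v) by exists x, v.
  have := Rsup_ub Eb HE.
  rewrite /I; lra.
have Happ : forall e, 0 < e -> exists x v, F x = Some v /\ v < I + e.
  move=> e He. apply NNPP => Hn.
  have : Rsup E <= - (I + e).
    apply Rsup_lub => // r [x [v [Hv ->]]]. apply Ropp_le_contravar.
    apply Rnot_lt_le => Hlt. apply Hn. by exists x, v.
  rewrite /I; lra.
have Hseq : forall n : nat, exists x, exists v, F x = Some v /\ v < I + / (INR n + 1).
  move=> n. apply Happ. apply Rinv_0_lt_compat. have := pos_INR n; lra.
set u := fun n => proj1_sig (constructive_indefinite_description _ (Hseq n)).
have Hu : forall n, exists v, F (u n) = Some v /\ v < I + / (INR n + 1).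
  move=> n. rewrite /u. by case: (constructive_indefinite_description _ _).
have Hcauchy : forall eps, 0 < eps -> exists N, forall n k, (N <= n)%nat -> (N <= k)%nat ->
        norm (sub (u n) (u k)) < eps.
  move=> eps Heps.
  have [N HN] := @norm_small_eps (mu * eps ^ 2 / 8) ltac:(apply Rdiv_lt_0_compat; [apply Rmult_lt_0_compat; [lra|apply pow_lt; lra]|lra]).
  exists N => n k Hn Hk.
  have [vn [Hvn Hvn']] := Hu n. have [vk [Hvk Hvk']] := Hu k.
  have [w [Hw Hwle]] := Hsc (u n) (u k) (1/2) vn vk ltac:(lra) Hvn Hvk.
  have := HI _ _ Hw. have := HN n Hn. have := HN k Hk.
  have Hin := Rinv_0_lt_compat (INR n + 1) ltac:(have := pos_INR n; lra).
  have Hik := Rinv_0_lt_compat (INR k + 1) ltac:(have := pos_INR k; lra).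
  move=> H1 H2 H3.
  apply lt_of_sq => //.
  have : mu / 8 * norm (sub (u n) (u k)) ^ 2 < mu * eps ^ 2 / 8 by lra.
  move=> H. nra.
have [l Hl] := Hcomp u Hcauchy.
case El : (F l) => [v|].
  exists l, v. split => //.
  have Hvle : v <= I.
    apply Rnot_lt_le => Hlt.
    have [d1 [Hd1 Hb1]] := Hlsc ((I + v)/2) l ltac:(rewrite El /=; lra).
    have [N1 HN1] := Hl d1 Hd1.
    have [N2 HN2] := @norm_small_eps ((v - I)/2) ltac:(lra).
    have [vn [Hvn Hvn']] := Hu (maxn N1 N2).
    have := Hb1 _ (HN1 _ (leq_maxl N1 N2)). rewrite Hvn /=.
    have := HN2 _ (leq_maxr N1 N2). lra.
  move=> x v' Hv'. have := HI _ _ Hv'. lra.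
exfalso.
have [d1 [Hd1 Hb1]] := Hlsc (I + 1) l ltac:(rewrite El //).
have [N1 HN1] := Hl d1 Hd1.
have [N2 HN2] := @norm_small_eps 1 ltac:(lra).
have [vn [Hvn Hvn']] := Hu (maxn N1 N2).
have := Hb1 _ (HN1 _ (leq_maxl N1 N2)). rewrite Hvn /=.
have := HN2 _ (leq_maxr N1 N2). lra.
Qed.

Lemma ge_lim a b : 0 <= b -> (forall t, 0 < t < 1 -> (1 - t) * b <= a) -> b <= a.
Proof.
move=> Hb H. apply Rnot_lt_le => Hlt.
case: (Rlt_le_dec a 0) => Ha.
  have := H (1/2) ltac:(lra). nra.
have Hb0 : 0 < b by lra.
have := H ((b - a)/(2 * b)) ltac:(split; [apply Rdiv_lt_0_compat; lra| apply Rmult_lt_reg_r with (2*b); [lra|]; field_simplify; lra]).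
have -> : (1 - (b - a) / (2 * b)) * b = (a + b) / 2 by field; lra. lra.
Qed.

Theorem growth F mu x0 v0 : strongly_convex mu F -> F x0 = Some v0 ->
  (forall x v, F x = Some v -> v0 <= v) ->
  forall x v, F x = Some v -> v0 + mu / 2 * norm (sub x x0) ^ 2 <= v.
Proof.
move=> Hsc H0 Hmin x v Hv.
case: (Rle_lt_dec mu 0) => Hmu.
  have := Hmin x v Hv. have := pow2_ge_0 (norm (sub x x0)). nra.
suff : mu / 2 * norm (sub x x0) ^ 2 <= v - v0 by lra.
apply ge_lim. have := pow2_ge_0 (norm (sub x x0)). nra.
move=> t Ht.
have [w [Hw Hwle]] := Hsc x x0 t v v0 ltac:(lra) Hv H0.
have := Hmin _ _ Hw. move=> Hw0.
have : t * (mu / 2 * (1 - t) * norm (sub x x0) ^ 2) <= t * (v - v0) by lra.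
move=> H. apply Rmult_le_reg_l with t; lra.
Qed.

Theorem gen_max phi mu (l : V -> R) : complete V -> 0 < mu -> strongly_convex mu phi ->
  lsc phi -> proper phi ->
  (forall x y, l (add x y) = l x + l y) -> (forall a x, l (scal a x) = a * l x) -> contf l ->
  exists x0 a, phi x0 = Some a /\
    forall x v, phi x = Some v -> l x - v + mu / 2 * norm (sub x x0) ^ 2 <= l x0 - a.
Proof.
move=> Hc Hmu Hsc Hlsc Hp Hadd Hscal Hcont.
set F := addc phi (fun x => - l x).
have HF : strongly_convex (mu + 0) F.
  apply sc_addc => // x y t Ht. rewrite /comb Hadd !Hscal. lra.
rewrite Rplus_0_r in HF.
have [x0 [v0 [H0 Hmin]]] := minimizer Hc Hmu HF (lsc_addc Hlsc (contf_opp Hcont)) (proper_addc _ Hp).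
move: H0; rewrite /F /addc. case E0: (phi x0) => [a|] // [Hv0].
exists x0, a; split => // x v Hv.
have H0' : F x0 = Some v0 by rewrite /F /addc E0 Hv0.
have Hg := growth HF H0' Hmin.
have Fx : F x = Some (v + - l x) by rewrite /F /addc Hv.
have := Hg _ _ Fx. lra.
Qed.
End Gen.

Set Implicit Arguments.
Unset Strict Implicit.

Lemma Rsup_ext (E E' : R -> Prop) : (forall r, E r <-> E' r) -> Rsup E = Rsup E'.
Proof.
move=> H. have -> : E = E' by apply functional_extensionality => r; apply propositional_extensionality.
by [].
Qed.

Section Conj.
Variable V : PreHilbert.
Implicit Types x y z q h : V.

Definition Sconj (phi : extfun V) q := Rsup (fun r => exists x v, phi x = Some v /\ r = inner q x - v).

Variables (phi : extfun V) (mu : R).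
Hypotheses (Hc : complete V) (Hmu : 0 < mu) (Hsc : strongly_convex mu phi) (Hlsc : lsc phi) (Hp : proper phi).

Lemma conj_val q : exists x0 a, phi x0 = Some a /\ Sconj phi q = inner q x0 - a /\
  forall x v, phi x = Some v -> inner q x - v + mu / 2 * norm (sub x x0) ^ 2 <= Sconj phi q.
Proof.
have [x0 [a [Ha Hb]]] := gen_max (l := fun x => inner q x) Hc Hmu Hsc Hlsc Hp
   (fun x y => inner_add_r q x y) (fun a x => inner_scal_r a q x) (contf_inner q).
have HS : Sconj phi q = inner q x0 - a.
  apply Rsup_max. by exists x0, a.
  move=> r [x [v [Hv ->]]]. have := Hb x v Hv. have := pow2_ge_0 (norm (sub x x0)).
  move=> H1 H2. have : 0 <= mu / 2 * norm (sub x x0) ^ 2 by apply Rmult_le_pos; lra. lra.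
exists x0, a. split => //. split => // x v Hv. rewrite HS. by apply Hb.
Qed.

Lemma conj_smooth q : exists x0 a, phi x0 = Some a /\ Sconj phi q = inner q x0 - a /\
  (forall x v, phi x = Some v -> inner q x - v + mu / 2 * norm (sub x x0) ^ 2 <= Sconj phi q) /\
  forall h, Sconj phi q + inner h x0 <= Sconj phi (add q h) /\
            Sconj phi (add q h) <= Sconj phi q + inner h x0 + norm h ^ 2 / (2 * mu).
Proof.
have [x0 [a [Ha [HS Hb]]]] := conj_val q.
exists x0, a. do 3 (split => //). move=> h. split.
  have [x1 [a1 [Ha1 [HS1 Hb1]]]] := conj_val (add q h).
  have := Hb1 x0 a Ha. rewrite inner_add_l. have := pow2_ge_0 (norm (sub x0 x1)).
  move=> H1 H2. have : 0 <= mu / 2 * norm (sub x0 x1) ^ 2 by apply Rmult_le_pos; lra. lra.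
have [x1 [a1 [Ha1 [HS1 Hb1]]]] := conj_val (add q h).
rewrite HS1 inner_add_l.
have H1 := Hb x1 a1 Ha1.
have H2 : inner h x1 = inner h x0 + inner h (sub x1 x0) by rewrite /sub inner_add_r inner_opp_r; ring.
have H3 := inner_le_norm h (sub x1 x0).
set d := norm (sub x1 x0) in H1 H3. set nh := norm h in H3 *.
have H4 : - (mu / 2 * d ^ 2) + nh * d <= nh ^ 2 / (2 * mu).
  have E : nh ^ 2 / (2 * mu) - (- (mu / 2 * d ^ 2) + nh * d) = (nh - mu * d) ^ 2 / (2 * mu) by field; lra.
  have : 0 <= (nh - mu * d) ^ 2 / (2 * mu) by apply Rmult_le_pos; [apply pow2_ge_0|apply Rlt_le, Rinv_0_lt_compat; lra]. lra.
lra.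
Qed.
End Conj.

Section Riesz.
Variable V : PreHilbert.
Implicit Types x y z q h : V.

Lemma riesz (l : V -> R) : complete V ->
  (forall x y, l (add x y) = l x + l y) -> (forall a x, l (scal a x) = a * l x) -> contf l ->
  exists y, forall x, inner y x = l x.
Proof.
move=> Hc Hadd Hscal Hcont.
set phi := addc (fun _ : V => Some 0) (fun x => / 2 * norm x ^ 2).
have Hsc : strongly_convex (0 + 1) phi.
  apply sc_addc.
    move=> x y t vx vy Ht [<-] [<-]. exists 0; split => //. lra.
  move=> x y t Ht. rewrite norm_comb_sq. lra.
rewrite Rplus_0_l in Hsc.
have Hlsc : lsc phi.
  apply lsc_addc; last by apply contf_normsq.
  move=> c x /= Hc0. exists 1; split => //; lra.
have Hp : proper phi by exists zero; rewrite /ext_dom /phi /addc; eexists.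
have [x0 [a [Ha Hb]]] := gen_max Hc Rlt_0_1 Hsc Hlsc Hp Hadd Hscal Hcont.
exists x0 => h.
move: Ha; rewrite /phi /addc norm_sq => -[Ha].
have key : forall t, t * (l h - inner x0 h) <= 0.
  move=> t.
  have := Hb (add x0 (scal t h)) (0 + / 2 * norm (add x0 (scal t h)) ^ 2) (Logic.eq_refl _).
  rewrite Hadd Hscal -Ha !norm_sq. ipexp. rewrite (inner_sym h x0). 
  move=> H. lra.
have := key 1. have := key (-1). lra.
Qed.
End Riesz.

Set Implicit Arguments.
Unset Strict Implicit.

Lemma lsum_ge (I : eqType) (l : seq I) f i : (forall j, 0 <= f j) -> i \in l -> f i <= lsum l f.
Proof.
move=> H; elim: l => [|b l IH] //=. rewrite in_cons => /orP [/eqP ->|Hi].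
  have := lsum_pos l f H. rewrite /lsum /=. lra.
have := IH Hi. have := H b. rewrite /lsum /=. lra.
Qed.
Lemma lsum_le (I : Type) (l : seq I) f g : (forall j, f j <= g j) -> lsum l f <= lsum l g.
Proof. move=> H; elim: l => [|b l IH] /=; rewrite /lsum /=; [lra|]. have := H b. rewrite /lsum in IH. lra. Qed.
Lemma lsum_const (I : Type) (l : seq I) c : lsum l (fun _ => c) = INR (size l) * c.
Proof. elim: l => [|b l IH]; rewrite /lsum /=; [lra|]. rewrite /lsum in IH. rewrite IH.
case: (size l) => [|n] /=; ring. Qed.

Section EuclidFacts.
Variable m : nat.

Lemma euclid_coord (x : Euclid m) i : Rabs (x i) <= norm x.
Proof.
rewrite -sqrt_Rsqr_abs /norm. apply sqrt_le_1_alt. rewrite /Rsqr.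
have -> : inner x x = lsum (enum 'I_m) (fun j => x j * x j) by [].
apply (@lsum_ge _ _ (fun j => x j * x j)). move=> j; apply Rle_0_sqr. by rewrite mem_enum.
Qed.

Lemma euclid_sub (x y : Euclid m) i : (sub x y) i = x i - y i.
Proof. by []. Qed.

Lemma euclid_complete : complete (Euclid m).
Proof.
move=> u Hu.
have Hci : forall i, Cauchy_crit (fun n => u n i).
  move=> i eps Heps. have [N HN] := Hu eps Heps. exists N => n k Hn Hk.
  have := euclid_coord (sub (u n) (u k)) i. rewrite euclid_sub /R_dist.
  have := HN n k (introT leP Hn) (introT leP Hk). lra.
set l := fun i => proj1_sig (R_complete _ (Hci i)).
have Hl : forall i, Un_cv (fun n => u n i) (l i).
  move=> i. rewrite /l. by case: (R_complete _ _).
have Hunif : forall (s : seq 'I_m) eta, 0 < eta -> exists N, forall n, (N <= n)%nat ->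
   forall j, j \in s -> Rabs (u n j - l j) < eta.
  elim=> [|b s IH] eta He. by exists 0%nat.
  have [N1 HN1] := IH eta He. have [N2 HN2] := Hl b eta He.
  exists (maxn N1 N2) => n Hn j. rewrite in_cons => /orP [/eqP ->|Hj].
    have := HN2 n. rewrite /R_dist. apply. apply/leP. apply: leq_trans Hn. apply leq_maxr.
  apply HN1 => //. apply: leq_trans Hn. apply leq_maxl.
exists (l : Euclid m) => eps Heps.
set eta := eps / (INR m + 1).
have Hm := pos_INR m.
have Heta : 0 < eta by apply Rdiv_lt_0_compat; lra.
have [N HN] := Hunif (enum 'I_m) eta Heta.
exists N => n Hn. apply lt_of_sq => //. rewrite norm_sq.
have -> : inner (sub (u n) (l : Euclid m)) (sub (u n) l) = lsum (enum 'I_m) (fun j => (u n j - l j) * (u n j - l j)) by [].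
apply Rle_lt_trans with (lsum (enum 'I_m) (fun _ => eta * eta)).
  apply lsum_le => j. have := HN n Hn j. rewrite mem_enum => /(_ isT) H.
  have H0 := Rabs_pos (u n j - l j). have : Rabs ((u n j - l j) * (u n j - l j)) <= eta * eta.
    rewrite Rabs_mult. apply Rmult_le_compat; lra.
  move=> H1. have := Rle_abs ((u n j - l j) * (u n j - l j)). lra.
rewrite lsum_const size_enum_ord.
have -> : INR m * (eta * eta) = eps ^ 2 * (INR m / (INR m + 1)) * (/ (INR m + 1)) by rewrite /eta; field; lra.
have H1 : INR m / (INR m + 1) < 1 by apply Rmult_lt_reg_r with (INR m + 1); [lra|]; field_simplify; lra.
have H2 : / (INR m + 1) <= 1 by rewrite -Rinv_1; apply Rinv_le_contravar; lra.
have H3 : 0 <= INR m / (INR m + 1) by apply Rmult_le_pos; [lra|apply Rlt_le, Rinv_0_lt_compat; lra].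
have H4 : 0 < / (INR m + 1) by apply Rinv_0_lt_compat; lra.
have H5 : 0 < eps ^ 2 by apply pow_lt.
have : eps ^ 2 * (INR m / (INR m + 1)) < eps ^ 2 * 1 by apply Rmult_lt_compat_l.
move=> H6. have : eps ^ 2 * (INR m / (INR m + 1)) * / (INR m + 1) <= eps ^ 2 * (INR m / (INR m + 1)) * 1.
  apply Rmult_le_compat_l => //. apply Rmult_le_pos; lra.
lra.
Qed.

Lemma euclid_eq0 (x y : Euclid m) : m = 0%nat -> x = y.
Proof. move=> Hm. apply functional_extensionality => i. exfalso. case: i => i Hi. move: Hi. by rewrite Hm. Qed.

Lemma euclid_nonzero : (0 < m)%nat -> exists h : Euclid m, 0 < inner h h.
Proof.
move=> Hm. set h : Euclid m := fun _ => 1. exists h. have H := inner_pos h.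
case: (Req_dec (inner h h) 0) => H0; last lra.
have E := @inner_def _ _ H0. have := f_equal (fun (h : Euclid m) => h (Ordinal Hm)) E. rewrite /h /=. lra.
Qed.
End EuclidFacts.

Set Implicit Arguments.
Unset Strict Implicit.

Lemma double_zero (W : PreHilbert) (a : W) : add a a = a -> a = zero.
Proof.
move=> H. have E : add (add a a) (opp a) = add a (opp a) by rewrite H.
rewrite -add_assoc !add_opp_r add_0_r in E. exact E.
Qed.

Lemma inner_ext (W : PreHilbert) (y y' : W) : (forall x, inner y x = inner y' x) -> y = y'.
Proof.
move=> H. apply sub_eq0. apply (@inner_def _ _). rewrite /sub. ipexp.
rewrite (H y) (H y'). ring.
Qed.

Lemma norm_sub_zero (W : PreHilbert) (y : W) : norm (sub y zero) = norm y.
Proof. rewrite /norm; f_equal. ipexp. ring. Qed.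

Section Op.
Variables (H W : PreHilbert) (A : H -> W).
Hypotheses (Hlin : linear_map A) (Hcont : continuous_map A).

Lemma A_zero : A zero = zero.
Proof. apply double_zero. rewrite -(proj1 Hlin) add_0_l //. Qed.

Lemma A_scal a x : A (scal a x) = scal a (A x).
Proof. by apply (proj2 Hlin). Qed.
Lemma A_add x y : A (add x y) = add (A x) (A y).
Proof. by apply (proj1 Hlin). Qed.

Definition opset := fun r => exists x, norm x <= 1 /\ r = norm (A x).

Lemma opset_bound : bound opset.
Proof.
have [d [Hd Hb]] := @Hcont zero 1 Rlt_0_1.
exists (2 / d) => r [x [Hx ->]].
set y := scal (d / 2) x.
have Hy : norm (sub y zero) < d.
  rewrite norm_sub_zero /y norm_scal Rabs_right; last lra.
  have := norm_nonneg x. nra.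
have := Hb y Hy. rewrite A_zero norm_sub_zero /y A_scal norm_scal Rabs_right; last lra.
move=> H1. have Hn := norm_nonneg (A x).
apply Rmult_le_reg_l with (d / 2); first lra.
have -> : d / 2 * (2 / d) = 1 by field; lra. lra.
Qed.

Lemma opnorm_nonneg : 0 <= opnorm A.
Proof.
apply Rsup_ub; first by apply opset_bound.
exists zero. rewrite A_zero !norm_zero. split; lra.
Qed.

Lemma opnorm_bound x : norm (A x) <= opnorm A * norm x.
Proof.
case: (Req_dec (norm x) 0) => Hx.
  rewrite (norm_zero_eq Hx) A_zero !norm_zero. lra.
have Hpos : 0 < norm x by have := norm_nonneg x; lra.
have : norm (A (scal (/ norm x) x)) <= opnorm A.
  apply Rsup_ub; first by apply opset_bound.
  exists (scal (/ norm x) x). split => //.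
  rewrite norm_scal Rabs_right; last by apply Rle_ge, Rlt_le, Rinv_0_lt_compat.
  rewrite Rinv_l; lra.
rewrite A_scal norm_scal Rabs_right; last by apply Rle_ge, Rlt_le, Rinv_0_lt_compat.
move=> H1. have := Rmult_le_compat_l (norm x) _ _ (Rlt_le _ _ Hpos) H1.
rewrite -Rmult_assoc Rinv_r; lra.
Qed.

Hypothesis Hcomp : complete H.

Lemma adjoint_spec p x : inner (adjoint A p) x = inner p (A x).
Proof.
have Ex : exists y, forall x, inner y x = inner p (A x).
  apply riesz => //.
  - move=> x1 x2. by rewrite A_add inner_add_r.
  - move=> a x1. by rewrite A_scal inner_scal_r.
  - move=> x1 e He.
    have [d [Hd Hb]] := @Hcont x1 (e / (norm p + 1)) ltac:(apply Rdiv_lt_0_compat => //; have := norm_nonneg p; lra).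
    exists d; split => // y Hy.
    have -> : inner p (A y) - inner p (A x1) = inner p (sub (A y) (A x1)) by rewrite /sub inner_add_r inner_opp_r; ring.
    apply Rle_lt_trans with (norm p * norm (sub (A y) (A x1))); first by apply cauchy_schwarz.
    have H1 := Hb y Hy. have Hq := norm_nonneg p. have Hs := norm_nonneg (sub (A y) (A x1)).
    have : norm (sub (A y) (A x1)) * (norm p + 1) < e.
      have -> : e = e / (norm p + 1) * (norm p + 1) by field; lra.
      apply Rmult_lt_compat_r; lra.
    nra.
rewrite /adjoint /choose_or. case: (excluded_middle_informative _) => [Hc|Hc]; last by exfalso.
case: (constructive_indefinite_description _ _) => y /= Hy. apply Hy.
Qed.

Lemma adjoint_add p d : adjoint A (add p d) = add (adjoint A p) (adjoint A d).
Proof. apply inner_ext => x. by rewrite inner_add_l !adjoint_spec inner_add_l. Qed.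

Lemma adjoint_norm d : norm (adjoint A d) <= opnorm A * norm d.
Proof.
set y := adjoint A d.
have E : norm y ^ 2 = inner d (A y) by rewrite norm_sq /y adjoint_spec.
have H1 := inner_le_norm d (A y). have H2 := opnorm_bound y.
have Hd := norm_nonneg d. have Hy := norm_nonneg y. have Ho := opnorm_nonneg.
case: (Req_dec (norm y) 0) => Hy0. rewrite Hy0. nra.
have : norm y * norm y <= norm y * (opnorm A * norm d).
  have : norm d * norm (A y) <= norm d * (opnorm A * norm y) by apply Rmult_le_compat_l.
  move=> H3. nra.
move=> H4. apply Rmult_le_reg_l with (norm y); lra.
Qed.
End Op.

Set Implicit Arguments.
Unset Strict Implicit.

Lemma dpl_ext f1 f2 x l1 l2 : derivable_pt_lim f1 x l1 -> (forall y, f1 y = f2 y) -> l1 = l2 ->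
  derivable_pt_lim f2 x l2.
Proof.
move=> H E <- e He. have [d Hd] := H e He. exists d => h Hh Hh'. rewrite -!E. by apply Hd.
Qed.

Section Diff.
Variable V : PreHilbert.
Implicit Types x y z p q h d k v w : V.

Lemma scal_0 x : scal 0 x = zero.
Proof. apply double_zero. by rewrite -scal_distr_r Rplus_0_r. Qed.

Lemma add_scal_scal y (s r : R) d : add (add y (scal s d)) (scal r d) = add y (scal (s + r) d).
Proof. by rewrite -add_assoc -scal_distr_r. Qed.

Lemma norm_sub_line y s d : norm (sub (add y (scal s d)) y) = Rabs s * norm d.
Proof.
rewrite -norm_scal /norm; f_equal. ipexp. ring.
Qed.

Lemma line_deriv (g : V -> R) (G : V -> V) y d s :
  (forall p, is_gradient_at g p (G p)) ->
  derivable_pt_lim (fun s => g (add y (scal s d))) s (inner (G (add y (scal s d))) d).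
Proof.
move=> HG eps Heps.
set x := add y (scal s d).
have Hnd := norm_nonneg d.
have He' : 0 < eps / (2 * (norm d + 1)) by apply Rdiv_lt_0_compat; lra.
have [dl [Hdl Hb]] := HG x _ He'.
have Hdel : 0 < dl / (norm d + 1) by apply Rdiv_lt_0_compat; lra.
exists (mkposreal _ Hdel) => h Hh /= Hhd.
have Hk : norm (scal h d) < dl.
  rewrite norm_scal. have Ha := Rabs_pos h.
  have : Rabs h * (norm d + 1) < dl.
    have -> : dl = dl / (norm d + 1) * (norm d + 1) by field; lra.
    apply Rmult_lt_compat_r; lra.
  nra.
have := Hb _ Hk. rewrite /x add_scal_scal inner_scal_r norm_scal.
move=> H.
have Hah : 0 < Rabs h by apply Rabs_pos_lt.
have -> : (g (add y (scal (s + h) d)) - g (add y (scal s d))) / h - inner (G (add y (scal s d))) d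
   = (g (add y (scal (s + h) d)) - g (add y (scal s d)) - h * inner (G (add y (scal s d))) d) / h
   by field.
rewrite /Rdiv Rabs_mult Rabs_inv.
apply Rle_lt_trans with (eps / (2 * (norm d + 1)) * norm d).
  apply Rmult_le_reg_r with (Rabs h) => //.
  rewrite Rmult_assoc Rinv_l; last lra. lra.
have : eps / (2 * (norm d + 1)) * norm d = eps * (norm d / (2 * (norm d + 1))) by field; lra.
move=> ->. have : norm d / (2 * (norm d + 1)) < 1.
  apply Rmult_lt_reg_r with (2 * (norm d + 1)); first lra. field_simplify; lra.
move=> H2. have := Rmult_lt_compat_l eps _ _ Heps H2. lra.
Qed.

Theorem descent (g : V -> R) (G : V -> V) c :
  (forall p, is_gradient_at g p (G p)) ->
  (forall p q, norm (sub (G p) (G q)) <= c * norm (sub p q)) ->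
  forall y d, g (add y d) <= g y + inner (G y) d + c / 2 * norm d ^ 2.
Proof.
move=> HG HL y d.
set psi := fun s => g (add y (scal s d)) - s * inner (G y) d - c / 2 * s ^ 2 * norm d ^ 2.
set psi' := fun s => inner (G (add y (scal s d))) d - inner (G y) d - c * s * norm d ^ 2.
have Hd : forall s, derivable_pt_lim psi s (psi' s).
  move=> s.
  have H1 := line_deriv y d s HG.
  have H2 := derivable_pt_lim_scal _ (inner (G y) d) _ _ (derivable_pt_lim_id s).
  have H3 := derivable_pt_lim_scal _ (c / 2 * norm d ^ 2) _ _ (derivable_pt_lim_pow s 2).
  have H4 := derivable_pt_lim_minus _ _ _ _ _ (derivable_pt_lim_minus _ _ _ _ _ H1 H2) H3.
  apply: (dpl_ext H4).
    move=> z. rewrite /psi /minus_fct /mult_real_fct /id. ring.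
  rewrite /psi'. simpl. field.
have [c0 [Hc0 Hc0']] := MVT_cor2 psi psi' 0 1 Rlt_0_1 (fun s _ => Hd s).
have Hneg : psi' c0 <= 0.
  rewrite /psi'.
  have E : inner (G (add y (scal c0 d))) d - inner (G y) d = inner (sub (G (add y (scal c0 d))) (G y)) d.
    rewrite /sub inner_add_l inner_opp_l; ring.
  rewrite E.
  have H1 := inner_le_norm (sub (G (add y (scal c0 d))) (G y)) d.
  have H2 := HL (add y (scal c0 d)) y. rewrite norm_sub_line Rabs_right in H2; last lra.
  have Hnd := norm_nonneg d.
  have : norm (sub (G (add y (scal c0 d))) (G y)) * norm d <= c * (c0 * norm d) * norm d.
    apply Rmult_le_compat_r => //.
  move=> H3. have -> : c * c0 * norm d ^ 2 = c * (c0 * norm d) * norm d by ring. lra.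
have : psi 1 <= psi 0 by lra.
rewrite /psi scal_1 scal_0 add_0_r. lra.
Qed.

Theorem first_order (g : V -> R) y Gy v : is_gradient_at g y Gy ->
  (forall x, inner v x - g x <= inner v y - g y) -> Gy = v.
Proof.
move=> HG Hmax. symmetry. apply sub_eq0. apply norm_zero_eq.
set w := sub v Gy.
have Hw := norm_nonneg w.
apply NNPP => Hne. have Hpos : 0 < norm w by lra.
have [dl [Hdl Hb]] := HG (norm w / 2) ltac:(lra).
set t := dl / (2 * norm w).
have Ht : 0 < t by apply Rdiv_lt_0_compat; lra.
have Hk : norm (scal t w) < dl.
  rewrite norm_scal Rabs_right; last lra. rewrite /t. field_simplify; lra.
have H1 := Hb _ Hk. have H2 := Hmax (add y (scal t w)).
have H3 := Rle_abs (g (add y (scal t w)) - g y - inner Gy (scal t w)).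
have E : inner v (add y (scal t w)) - inner v y - inner Gy (scal t w) = t * norm w ^ 2.
  rewrite norm_sq /w. ipexp. ring.
have Ht' : Rabs t = t by apply Rabs_right; lra.
rewrite norm_scal Ht' in H1.
have : t * norm w ^ 2 <= norm w / 2 * (t * norm w) by lra.
move=> H4. have : t * norm w * (norm w / 2) <= 0 by nra.
move=> H5. have : 0 < t * norm w * (norm w / 2) by apply Rmult_lt_0_compat; [apply Rmult_lt_0_compat|]; lra.
lra.
Qed.

Theorem grad_unique (F : V -> R) p v v' : is_gradient_at F p v -> is_gradient_at F p v' -> v = v'.
Proof.
move=> H1 H2. apply sub_eq0. apply norm_zero_eq.
set w := sub v v'. have Hw := norm_nonneg w.
apply NNPP => Hne. have Hpos : 0 < norm w by lra.
have [d1 [Hd1 Hb1]] := H1 (norm w / 4) ltac:(lra).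
have [d2 [Hd2 Hb2]] := H2 (norm w / 4) ltac:(lra).
set dl := Rmin d1 d2. have Hdl : 0 < dl by apply Rmin_pos.
set t := dl / (2 * norm w).
have Ht : 0 < t by apply Rdiv_lt_0_compat; lra.
have Hk : norm (scal t w) < dl.
  rewrite norm_scal Rabs_right; last lra. rewrite /t. field_simplify; lra.
have K1 := Hb1 (scal t w) ltac:(have := Rmin_l d1 d2; rewrite -/dl; lra).
have K2 := Hb2 (scal t w) ltac:(have := Rmin_r d1 d2; rewrite -/dl; lra).
have Ht' : Rabs t = t by apply Rabs_right; lra.
rewrite norm_scal Ht' in K1 K2.
have E : inner v (scal t w) - inner v' (scal t w) = t * norm w ^ 2.
  rewrite norm_sq /w. ipexp. ring.
move: K1 K2 E. set a := F (add p (scal t w)) - F p. set b1 := inner v (scal t w). set b2 := inner v' (scal t w).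
move=> K1 K2 E.
have K1' := Rle_abs (a - b1). have K1'' := Rle_abs (- (a - b1)). rewrite Rabs_Ropp in K1''.
have K2' := Rle_abs (a - b2). have K2'' := Rle_abs (- (a - b2)). rewrite Rabs_Ropp in K2''.
have : t * norm w ^ 2 <= norm w / 2 * (t * norm w) by lra.
move=> H4. have : t * norm w * (norm w / 2) <= 0 by nra.
move=> H5. have : 0 < t * norm w * (norm w / 2) by apply Rmult_lt_0_compat; [apply Rmult_lt_0_compat|]; lra.
lra.
Qed.

Lemma grad_eq (F : V -> R) p v : is_gradient_at F p v -> grad F p = v.
Proof.
move=> H. rewrite /grad /choose_or. case: (excluded_middle_informative _) => [Hc|Hc]; last by exfalso; apply Hc; exists v.
case: (constructive_indefinite_description _ _) => y /= Hy. by apply (grad_unique Hy).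
Qed.

Lemma grad_of_quad (F : V -> R) p v c : 0 < c ->
  (forall h, 0 <= F (add p h) - F p - inner v h <= c * norm h ^ 2) -> is_gradient_at F p v.
Proof.
move=> Hc H e He. exists (e / c); split; first by apply Rdiv_lt_0_compat.
move=> h Hh. have [H1 H2] := H h. rewrite Rabs_right; last lra.
have Hn := norm_nonneg h.
have : c * norm h ^ 2 <= c * (e / c) * norm h.
  have -> : c * norm h ^ 2 = c * norm h * norm h by ring.
  apply Rmult_le_compat_r => //. apply Rmult_le_compat_l; lra.
have -> : c * (e / c) = e by field; lra. lra.
Qed.
End Diff.

Set Implicit Arguments.
Unset Strict Implicit.

Section FGM.
Variables (V : PreHilbert) (F : V -> R) (G : V -> V) (L kappa : R).
Implicit Types p w x y z h : V.
Hypotheses (Hk : 0 < kappa) (HkL : kappa <= L)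
  (Hg : forall p, grad F p = G p)
  (Hdesc : forall y h, F (add y h) <= F y + inner (G y) h + L / 2 * inner h h)
  (Hlow : forall y z, F y + inner (G y) (sub z y) + kappa / 2 * inner (sub z y) (sub z y) <= F z).

Definition Pk k := fst (fgm F L kappa k).
Definition Wk k := snd (fgm F L kappa k).
Definition qq := sqrt kappa / sqrt L.
Definition bb := (sqrt L - sqrt kappa) / (sqrt L + sqrt kappa).

Lemma fgm_S k : Pk k.+1 = sub (Wk k) (scal (/ L) (G (Wk k))) /\
   Wk k.+1 = add (Pk k.+1) (scal bb (sub (Pk k.+1) (Pk k))).
Proof.
rewrite /Pk /Wk /=. case: (fgm F L kappa k) => p w /=. by rewrite Hg.
Qed.

Definition nxt_p w := sub w (scal (/ L) (G w)).
Definition nxt_w p w := add (nxt_p w) (scal bb (sub (nxt_p w) p)).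
Definition vv p w := scal (/ qq) (sub (scal (1 + qq) w) p).
Definition Vk k := vv (Pk k) (Wk k).
Definition Phi k x := F (Pk k) - F x + kappa / 2 * inner (sub (Vk k) x) (sub (Vk k) x).

Lemma sq_facts : 0 < sqrt L /\ 0 < sqrt kappa /\ sqrt kappa <= sqrt L /\
  L = sqrt L * sqrt L /\ kappa = sqrt kappa * sqrt kappa /\ 0 < qq /\ qq <= 1.
Proof.
have HsL : 0 < sqrt L by apply sqrt_lt_R0; lra.
have Hsk : 0 < sqrt kappa by apply sqrt_lt_R0; lra.
have HskL : sqrt kappa <= sqrt L by apply sqrt_le_1_alt.
have EL : L = sqrt L * sqrt L by rewrite sqrt_sqrt; lra.
have Ek : kappa = sqrt kappa * sqrt kappa by rewrite sqrt_sqrt; lra.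
have Hq0 : 0 < qq by apply Rdiv_lt_0_compat.
have Hq1 : qq <= 1.
  rewrite /qq. apply Rmult_le_reg_r with (sqrt L) => //. rewrite /Rdiv Rmult_assoc Rinv_l; lra.
tauto.
Qed.

Lemma step_eq p w x :
  let g := G w in
  (1 - qq) * (F p - F x + kappa / 2 * inner (sub (vv p w) x) (sub (vv p w) x))
  - (F (nxt_p w) - F x + kappa / 2 * inner (sub (vv (nxt_p w) (nxt_w p w)) x) (sub (vv (nxt_p w) (nxt_w p w)) x))
  = (F w + inner g (opp (scal (/ L) g)) + L / 2 * inner (opp (scal (/ L) g)) (opp (scal (/ L) g)) - F (nxt_p w))
  + (1 - qq) * (F p - (F w + inner g (sub p w) + kappa / 2 * inner (sub p w) (sub p w)))
  + qq * (F x - (F w + inner g (sub x w) + kappa / 2 * inner (sub x w) (sub x w)))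
  + qq * (1 - qq) * (kappa / 2) * inner (sub (vv p w) w) (sub (vv p w) w)
  + (1 - qq) * (kappa / 2) * inner (sub p w) (sub p w).
Proof.
move=> g. have [HsL [Hsk [HskL [EL [Ek [Hq0 Hq1]]]]]] := sq_facts.
rewrite /vv /nxt_w /nxt_p /bb /qq. rewrite -/g.
ipexp.
rewrite ?(inner_sym g w) ?(inner_sym p w) ?(inner_sym x w) ?(inner_sym p g) ?(inner_sym x g) ?(inner_sym x p).
move: EL Ek HsL Hsk. set sL := sqrt L. set sk := sqrt kappa. move=> EL Ek HsL Hsk.
rewrite EL Ek. field. lra.
Qed.

Lemma Phi_step k x : Phi k.+1 x <= (1 - qq) * Phi k x.
Proof.
have [HsL [Hsk [HskL [EL [Ek [Hq0 Hq1]]]]]] := sq_facts.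
have [HP HW] := fgm_S k.
have HP' : Pk k.+1 = nxt_p (Wk k) by exact HP.
have HW' : Wk k.+1 = nxt_w (Pk k) (Wk k) by rewrite HW HP'.
rewrite /Phi /Vk HW' HP'.
set p := Pk k. set w := Wk k.
have EQ := step_eq p w x. simpl in EQ.
set g := G w in EQ.
have S1 : F (nxt_p w) <= F w + inner g (opp (scal (/ L) g)) + L / 2 * inner (opp (scal (/ L) g)) (opp (scal (/ L) g))
  := Hdesc w (opp (scal (/ L) g)).
have S2 := Hlow w p. have S3 := Hlow w x. rewrite -/g in S2 S3.
have N1 := inner_pos (sub (vv p w) w). have N2 := inner_pos (sub p w).
have T2 : 0 <= (1 - qq) * (F p - (F w + inner g (sub p w) + kappa / 2 * inner (sub p w) (sub p w))).
  apply Rmult_le_pos; lra.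
have T3 : 0 <= qq * (F x - (F w + inner g (sub x w) + kappa / 2 * inner (sub x w) (sub x w))).
  apply Rmult_le_pos; lra.
have T4 : 0 <= qq * (1 - qq) * (kappa / 2) * inner (sub (vv p w) w) (sub (vv p w) w).
  apply Rmult_le_pos => //. apply Rmult_le_pos; [apply Rmult_le_pos|]; lra.
have T5 : 0 <= (1 - qq) * (kappa / 2) * inner (sub p w) (sub p w).
  apply Rmult_le_pos => //. apply Rmult_le_pos; lra.
lra.
Qed.

Lemma Phi_iter k x : Phi k x <= (1 - qq) ^ k * Phi 0 x.
Proof.
have [HsL [Hsk [HskL [EL [Ek [Hq0 Hq1]]]]]] := sq_facts.
elim: k => [|k IH] /=. lra.
have := Phi_step k x. have : 0 <= 1 - qq by lra. move=> H1 H2.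
have := Rmult_le_compat_l _ _ _ H1 IH. lra.
Qed.

Theorem fgm_rate k x : F (Pk k) - F x <= (1 - qq) ^ k * (F zero - F x + kappa / 2 * inner x x).
Proof.
have H := Phi_iter k x.
have E0 : Phi 0 x = F zero - F x + kappa / 2 * inner x x.
  rewrite /Phi /Vk /vv /Pk /Wk /=. ipexp. field. have [_ [_ [_ [_ [_ [Hq0 _]]]]]] := sq_facts. lra.
rewrite E0 in H.
have : F (Pk k) - F x <= Phi k x.
  rewrite /Phi. have := inner_pos (sub (Vk k) x). have : 0 <= kappa / 2 by lra. move=> H1 H2.
  have := Rmult_le_pos _ _ H1 H2. lra.
lra.
Qed.
End FGM.

Set Implicit Arguments.
Unset Strict Implicit.

Section Helpers.
Variable V : PreHilbert.
Implicit Types x y z h : V.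

Lemma contf_lsc (c : V -> R) : contf c -> lsc (ext_of c).
Proof.
move=> Hc C x /= HC. have [d [Hd Hb]] := Hc x (c x - C) ltac:(lra).
exists d; split => // y Hy /=. have := Hb y Hy. move=> H. have := Rabs_def2 _ _ H. lra.
Qed.

Lemma sc_of_low (F : V -> R) (Gf : V -> V) kappa :
  (forall y z, F y + inner (Gf y) (sub z y) + kappa / 2 * inner (sub z y) (sub z y) <= F z) ->
  strongly_convex kappa (ext_of F).
Proof.
move=> Hlow x y t vx vy Ht [<-] [<-]. exists (F (comb t x y)). split => //.
set z := comb t x y.
have H1 := Hlow z x. have H2 := Hlow z y.
have E1 : t * inner (Gf z) (sub x z) + (1 - t) * inner (Gf z) (sub y z) = 0.
  rewrite /z. ipexp. ring.
have E2 : t * inner (sub x z) (sub x z) + (1 - t) * inner (sub y z) (sub y z) = t * (1 - t) * norm (sub x y) ^ 2.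
  rewrite norm_sq /z. ipexp. rewrite !(inner_sym y x). ring.
have K1 := Rmult_le_compat_l t _ _ (proj1 Ht) H1.
have K2 := Rmult_le_compat_l (1 - t) _ _ ltac:(lra) H2.
have E3 : kappa / 2 * t * (1 - t) * norm (sub x y) ^ 2 = kappa / 2 * (t * inner (sub x z) (sub x z) + (1 - t) * inner (sub y z) (sub y z)) by rewrite E2; ring.
rewrite E3. lra.
Qed.

Lemma contf_of_bounds (F : V -> R) (Gf : V -> V) L :
  (forall y h, F (add y h) <= F y + inner (Gf y) h + L / 2 * inner h h) ->
  (forall y h, F y + inner (Gf y) h <= F (add y h)) -> contf F.
Proof.
move=> Hu Hl x e He.
set K := norm (Gf x) + Rabs L + 1.
have HK : 0 < K by rewrite /K; have := norm_nonneg (Gf x); have := Rabs_pos L; lra.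
exists (Rmin 1 (e / K)); split; first by apply Rmin_pos; [lra|apply Rdiv_lt_0_compat].
move=> y Hy. have Hy1 : norm (sub y x) < 1 by have := Rmin_l 1 (e/K); lra.
have Hy2 : norm (sub y x) < e / K by have := Rmin_r 1 (e/K); lra.
set h := sub y x in Hy1 Hy2.
have Ey : y = add x h by rewrite /h add_sub.
have U := Hu x h. have Lo := Hl x h. rewrite -Ey in U Lo.
have CS := cauchy_schwarz (Gf x) h. rewrite -norm_sq in U.
have Hn := norm_nonneg h. have Hg := norm_nonneg (Gf x).
have HL : L / 2 * norm h ^ 2 <= Rabs L * norm h.
  have := Rle_abs L. have : norm h ^ 2 <= norm h by nra. move=> H1 H2.
  have := Rabs_pos L. nra.
have B : Rabs (F y - F x) <= (norm (Gf x) + Rabs L) * norm h.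
  apply Rabs_le. have := Rabs_def2 (inner (Gf x) h) (norm (Gf x) * norm h + 1) ltac:(lra).
  have := Rle_abs (inner (Gf x) h). have := Rle_abs (- inner (Gf x) h). rewrite Rabs_Ropp.
  have := Rabs_pos L. nra.
have : (norm (Gf x) + Rabs L) * norm h <= K * norm h by rewrite /K; nra.
have : K * norm h < e.
  have -> : e = K * (e / K) by field; lra. apply Rmult_lt_compat_l => //.
lra.
Qed.

Lemma norm_le_of_sq (v : V) X : 0 <= X -> norm v ^ 2 <= X ^ 2 -> norm v <= X.
Proof. move=> HX H. have := norm_nonneg v. nra. Qed.
End Helpers.

Lemma exp_pow_bound q k : 0 <= q <= 1 -> (1 - q) ^ k <= exp (- INR k * q).
Proof.
move=> Hq. elim: k => [|k IH]. have -> : - INR 0 * q = 0 by simpl; ring. rewrite exp_0 /=; lra.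
have H1 : 1 - q <= exp (- q).
  case: (Req_dec q 0) => Hq0. rewrite Hq0 Ropp_0 exp_0; lra.
  have := exp_ineq1 (- q) ltac:(lra). lra.
rewrite S_INR. have -> : - (INR k + 1) * q = - INR k * q + - q by ring.
rewrite exp_plus /=. rewrite Rmult_comm.
apply Rmult_le_compat => //. apply pow_le; lra. lra.
Qed.

Unset Implicit Arguments.
Set Strict Implicit.

Theorem mainTheorem9
  (H : PreHilbert) (m : nat)
  (f : extfun H) (g : Euclid m -> R) (A : H -> Euclid m)
  (mu kappa rho : R) (pstar : Euclid m) :
  (* standing assumptions *)
  is_Hilbert H ->
  proper f -> convex f -> lsc f -> bounded_dom f ->
  0 < mu -> proper (ext_of g) -> lsc (ext_of g) -> strongly_convex mu (ext_of g) ->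
  linear_map A -> continuous_map A ->
  (exists x, ext_dom f x /\ ext_dom (ext_of g) (A x)) ->
  (* g real-valued, differentiable with (1/kappa)-Lipschitz gradient *)
  0 < kappa ->
  (exists G : Euclid m -> Euclid m,
      (forall p, is_gradient_at g p (G p)) /\
      (forall p q, norm (sub (G p) (G q)) <= / kappa * norm (sub p q))) ->
  (* p* is an optimal solution of (D), i.e. a minimizer of theta *)
  (forall p, theta f (ext_of g) A pstar <= theta f (ext_of g) A p) ->
  0 < rho ->
  let th := theta f (ext_of g) A in
  let thr := theta_rho rho f (ext_of g) A in
  let L := Lrho A mu rho in
  let Df := D_f_const f in
  forall k : nat,
    let pk := fst (fgm thr L kappa k) in
    th pk - th pstar
      <= rho * Df + 2 * (th zero - th pstar + rho * Df)
                      * exp (- INR k * sqrt (kappa / L))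
    /\
    norm (grad thr pk)
      <= 2 * sqrt (L * (th zero - th pstar + rho * Df))
           * exp (- (INR k / 2) * sqrt (kappa / L)).
Proof.
move=> Hcomp Hpf Hcf Hlf Hbf Hmu Hpg Hlg Hsg Hlin Hcont _ Hk [G [HG HGL]] Hopt Hrho th thr L Df k pk.
have HDf : forall x, ext_dom f x -> / 2 * norm x ^ 2 <= Df.
  have [M HM] := Hbf.
  move=> x Hx. apply Rsup_ub; last by exists x.
  exists (/ 2 * M ^ 2) => r [y [Hy ->]]. have := HM y Hy. have := norm_nonneg y. move=> H1 H2.
  have : norm y ^ 2 <= M ^ 2 by nra. lra.
have HDf0 : 0 <= Df.
  have [x Hx] := Hpf. have := HDf x Hx. have := pow2_ge_0 (norm x). lra.
have HC0 : 0 <= th zero - th pstar + rho * Df.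
  have := Hopt zero. rewrite -/th. have := Rmult_le_pos _ _ (Rlt_le _ _ Hrho) HDf0. lra.
have [Hm0|Hmpos] : m = 0%nat \/ (0 < m)%nat by case E: m => [|m']; [left|right].
  have Epk : pk = pstar by apply euclid_eq0.
  rewrite Epk. split.
    have := exp_pos (- INR k * sqrt (kappa / L)). have := Rmult_le_pos _ _ (Rlt_le _ _ Hrho) HDf0. nra.
  rewrite (euclid_eq0 (grad thr pstar) zero Hm0) norm_zero.
  apply Rmult_le_pos; last by apply Rlt_le, exp_pos.
  have := sqrt_pos (L * (th zero - th pstar + rho * Df)). lra.
set phif := addc f (fun x : H => rho / 2 * norm x ^ 2).
have scf : strongly_convex rho phif.
  have := @sc_addc H 0 rho f (fun x : H => rho / 2 * norm x ^ 2) Hcf.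
  rewrite Rplus_0_l. apply => x y t Ht. rewrite norm_comb_sq. apply Req_le; ring.
have lscf : lsc phif := lsc_addc Hlf (contf_normsq _).
have ppf : proper phif := proper_addc _ Hpf.
have Ecr : forall q, conj_rho rho f q = Sconj phif q.
  move=> q. apply Rsup_ext => r; split.
  - move=> [x [v [Hv ->]]]. exists x, (v + rho / 2 * norm x ^ 2). split; last ring. by rewrite /phif /addc Hv.
  - move=> [x [v [Hv ->]]]. move: Hv; rewrite /phif /addc. case E: (f x) => [u|] // [<-]. exists x, u. split => //. ring.
have F1s : forall p, exists G1, forall d,
   conj_rho rho f (adjoint A p) + inner d G1 <= conj_rho rho f (adjoint A (add p d)) /\
   conj_rho rho f (adjoint A (add p d)) <= conj_rho rho f (adjoint A p) + inner d G1 + opnorm A ^ 2 / (2 * rho) * norm d ^ 2.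
  move=> p. have [x0 [a [Ha [HS [Hb Hsm]]]]] := conj_smooth Hcomp Hrho scf lscf ppf (adjoint A p).
  exists (A x0) => d. rewrite !Ecr (adjoint_add Hlin Hcont Hcomp p d).
  have [L1 U1] := Hsm (adjoint A d). rewrite (adjoint_spec Hlin Hcont Hcomp) in L1 U1.
  split => //.
  have Hn := adjoint_norm Hlin Hcont Hcomp d. have Hn0 := norm_nonneg (adjoint A d).
  have Ho := opnorm_nonneg Hlin Hcont. have Hd0 := norm_nonneg d.
  have : norm (adjoint A d) ^ 2 <= opnorm A ^ 2 * norm d ^ 2.
    rewrite -Rpow_mult_distr. apply pow_incr. lra.
  move=> Hsq.
  have : norm (adjoint A d) ^ 2 / (2 * rho) <= opnorm A ^ 2 * norm d ^ 2 / (2 * rho).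
    apply Rmult_le_compat_r => //. apply Rlt_le, Rinv_0_lt_compat; lra.
  have -> : opnorm A ^ 2 * norm d ^ 2 / (2 * rho) = opnorm A ^ 2 / (2 * rho) * norm d ^ 2 by field; lra.
  lra.
have F2s : forall p, exists G2, forall d,
   Sconj (ext_of g) (opp p) + inner d G2 + kappa / 2 * norm d ^ 2 <= Sconj (ext_of g) (opp (add p d)) /\
   Sconj (ext_of g) (opp (add p d)) <= Sconj (ext_of g) (opp p) + inner d G2 + norm d ^ 2 / (2 * mu).
  move=> p. set q := opp p.
  have [x0 [a [Ha [HS [Hb Hsm]]]]] := conj_smooth (@euclid_complete m) Hmu Hsg Hlg Hpg q.
  move: Ha => [Ha]. rewrite -Ha in HS.
  exists (opp x0) => d.
  have Eo : opp (add p d) = add q (opp d) by apply functional_extensionality => i; rewrite /q /=; ring.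
  rewrite Eo. have [L2 U2] := Hsm (opp d).
  have Ei : inner (opp d) x0 = inner d (opp x0) by ipexp.
  rewrite Ei norm_opp in U2. split => //.
  have Gx0 : G x0 = q.
    apply: (first_order (HG x0)) => x. have := Hb x (g x) (Logic.eq_refl _).
    have := pow2_ge_0 (norm (sub x x0)). move=> H1 H2.
    have : 0 <= mu / 2 * norm (sub x x0) ^ 2 by apply Rmult_le_pos; lra. lra.
  have Dg : g (add x0 (scal kappa (opp d))) <= g x0 - kappa * inner q d + kappa / 2 * inner d d.
    have := descent HG HGL x0 (scal kappa (opp d)). rewrite Gx0 norm_sq. ipexp.
    move=> D. apply (Rle_trans _ _ _ D). apply Req_le; field; lra.
  have [x1 [a1 [Ha1 [HS1 [Hb1 _]]]]] := conj_smooth (@euclid_complete m) Hmu Hsg Hlg Hpg (add q (opp d)).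
  have E1 := Hb1 (add x0 (scal kappa (opp d))) _ (Logic.eq_refl _).
  have := pow2_ge_0 (norm (sub (add x0 (scal kappa (opp d))) x1)). move=> Hp2.
  have : 0 <= mu / 2 * norm (sub (add x0 (scal kappa (opp d))) x1) ^ 2 by apply Rmult_le_pos; lra.
  move=> Hp3. rewrite HS norm_sq.
  have E2 : inner (add q (opp d)) (add x0 (scal kappa (opp d))) =
     inner q x0 - kappa * inner q d - inner d x0 + kappa * inner d d.
    ipexp. rewrite ?(inner_sym d q). ring.
  have E3 : inner d (opp x0) = - inner d x0 by ipexp.
  lra.
have HLpos : 0 < L.
  rewrite /L /Lrho. have := pow2_ge_0 (opnorm A). have := Rinv_0_lt_compat _ Hmu. move=> H1 H2.
  have : 0 <= opnorm A ^ 2 / rho by apply Rmult_le_pos => //; apply Rlt_le, Rinv_0_lt_compat. lra.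
have Thr : forall p, exists v, forall d, thr p + inner v d + kappa / 2 * inner d d <= thr (add p d) /\
    thr (add p d) <= thr p + inner v d + L / 2 * inner d d.
  move=> p. have [G1 H1] := F1s p. have [G2 H2] := F2s p. exists (add G1 G2) => d.
  have [A1 B1] := H1 d. have [A2 B2] := H2 d.
  have Ef : forall q, fconj (ext_of g) q = Sconj (ext_of g) q by [].
  rewrite /thr /theta_rho !Ef. rewrite norm_sq in A2 B1 B2.
  have EL : L / 2 * inner d d = opnorm A ^ 2 / (2 * rho) * inner d d + inner d d / (2 * mu) by rewrite /L /Lrho; field; lra.
  rewrite inner_add_l (inner_sym G1 d) (inner_sym G2 d) EL. lra.
set Gt := fun p => proj1_sig (constructive_indefinite_description _ (Thr p)).
have HGt : forall p d, thr p + inner (Gt p) d + kappa / 2 * inner d d <= thr (add p d) /\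
    thr (add p d) <= thr p + inner (Gt p) d + L / 2 * inner d d.
  move=> p. rewrite /Gt. by case: (constructive_indefinite_description _ _).
have Hdesc : forall y h, thr (add y h) <= thr y + inner (Gt y) h + L / 2 * inner h h.
  move=> y h. exact (proj2 (HGt y h)).
have Hlow : forall y z, thr y + inner (Gt y) (sub z y) + kappa / 2 * inner (sub z y) (sub z y) <= thr z.
  move=> y z. have := proj1 (HGt y (sub z y)). by rewrite add_sub.
have Hlow' : forall y h, thr y + inner (Gt y) h <= thr (add y h).
  move=> y h. have := proj1 (HGt y h). have := inner_pos h. have : 0 < kappa / 2 by lra. move=> H1 H2.
  have := Rmult_le_pos _ _ (Rlt_le _ _ H1) H2. lra.
have Hgrad : forall p, grad thr p = Gt p.
  move=> p. apply grad_eq. apply (@grad_of_quad _ _ _ _ (L / 2)); first lra.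
  move=> h. rewrite norm_sq. have [K1 K2] := HGt p h. have := inner_pos h. have : 0 < kappa / 2 by lra. move=> H1 H2.
  have := Rmult_le_pos _ _ (Rlt_le _ _ H1) H2. lra.
have HkL : kappa <= L.
  have [h Hh] := euclid_nonzero Hmpos. have [K1 K2] := HGt zero h.
  have : kappa / 2 * inner h h <= L / 2 * inner h h by lra.
  move=> H1. apply Rmult_le_reg_r with (inner h h / 2); first lra. lra.
have rate := fgm_rate Hk HkL Hgrad Hdesc Hlow k.
have Hscthr := sc_of_low Hlow.
have Hlscthr : lsc (ext_of thr) := contf_lsc (contf_of_bounds Hdesc Hlow').
have Hpthr : proper (ext_of thr) by exists zero; eexists.
have [xm [vm [Hxm Hmin]]] := minimizer (@euclid_complete m) Hk Hscthr Hlscthr Hpthr.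
move: Hxm => [Hxm]. 
have Hmin' : forall z, thr xm <= thr z by move=> z; rewrite Hxm; exact (Hmin z (thr z) (Logic.eq_refl _)).
have Hgr : thr xm + kappa / 2 * inner xm xm <= thr zero.
  have Hm2 : forall x v, ext_of thr x = Some v -> thr xm <= v by move=> x v [<-]; apply Hmin'.
  have := @growth _ (ext_of thr) kappa xm (thr xm) Hscthr (Logic.eq_refl _) Hm2 zero (thr zero) (Logic.eq_refl _).
  rewrite ?Hxm norm_sq. have -> : inner (sub zero xm) (sub zero xm) = inner xm xm by ipexp; ring. by [].
have Hfr_le : forall q x v, f x = Some v -> inner q x - v - rho / 2 * norm x ^ 2 <= conj_rho rho f q.
  move=> q x v Hv. have [x0 [a [Ha [HS Hb]]]] := conj_val Hcomp Hrho scf lscf ppf q.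
  have Hx : phif x = Some (v + rho / 2 * norm x ^ 2) by rewrite /phif /addc Hv.
  have := Hb _ _ Hx. rewrite Ecr. have := pow2_ge_0 (norm (sub x x0)). move=> H1 H2.
  have : 0 <= rho / 2 * norm (sub x x0) ^ 2 by apply Rmult_le_pos; lra. lra.
have Hfb : forall q x v, f x = Some v -> inner q x - v <= conj_rho rho f q + rho * Df.
  move=> q x v Hv. have := Hfr_le q x v Hv. have := HDf x (ex_intro _ v Hv).
  move=> H1 H2. have : rho * (/ 2 * norm x ^ 2) <= rho * Df by apply Rmult_le_compat_l; lra. lra.
have Hfc_up : forall q, fconj f q <= conj_rho rho f q + rho * Df.
  move=> q. apply Rsup_lub. have [x [v Hv]] := Hpf. by exists (inner q x - v), x, v.
  move=> r [x [v [Hv ->]]]. by apply Hfb.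
have Hfc_lo : forall q, conj_rho rho f q <= fconj f q.
  move=> q. have [x0 [a [Ha [HS Hb]]]] := conj_val Hcomp Hrho scf lscf ppf q.
  move: Ha; rewrite /phif /addc. case E: (f x0) => [u|] // [Ha].
  rewrite Ecr HS -Ha.
  apply Rle_trans with (inner q x0 - u).
    have := pow2_ge_0 (norm x0). move=> H1. have : 0 <= rho / 2 * norm x0 ^ 2 by apply Rmult_le_pos; lra. lra.
  apply Rsup_ub. exists (conj_rho rho f q + rho * Df) => r [x [v [Hv ->]]]. by apply Hfb.
  by exists x0, u.
have Hth1 : forall p, thr p <= th p.
  move=> p. rewrite /thr /th /theta /theta_rho. have := Hfc_lo (adjoint A p). lra.
have Hth2 : forall p, th p <= thr p + rho * Df.
  move=> p. rewrite /thr /th /theta /theta_rho. have := Hfc_up (adjoint A p). lra.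
have [HsL [Hsk [HskL [EL [Ek [Hq0 Hq1]]]]]] := sq_facts Hk HkL.
have Eq : sqrt (kappa / L) = qq L kappa by rewrite sqrt_div_alt.
set e := (1 - qq L kappa) ^ k.
have He0 : 0 <= e by apply pow_le; lra.
have Hee : e <= exp (- INR k * sqrt (kappa / L)) by rewrite Eq; apply exp_pow_bound; lra.
set C := th zero - th pstar + rho * Df.
have HR1 : thr pk - thr xm <= 2 * e * C.
  have H1 := rate xm. change (Pk thr L kappa k) with pk in H1. rewrite -/e in H1.
  have H2 : thr zero - thr xm + kappa / 2 * inner xm xm <= 2 * C.
    have := Hth1 zero. have := Hth2 xm. have := Hopt xm. rewrite -/th. rewrite /C. lra.
  have := Rmult_le_compat_l _ _ _ He0 H2. lra.
split.
  have := Hth2 pk. have := Hth1 pstar. have := Hmin' pstar.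
  have := Rmult_le_compat_l _ _ _ (Rmult_le_pos 2 C ltac:(lra) HC0) Hee. rewrite -/C. lra.
rewrite Hgrad.
set v := Gt pk.
have Hv2 : norm v ^ 2 <= 2 * L * (thr pk - thr xm).
  have := Hdesc pk (opp (scal (/ L) v)). have := Hmin' (add pk (opp (scal (/ L) v))).
  rewrite norm_sq. ipexp.
  move=> H1 H2.
  have E : inner v v * (/ L * (/ L * (L / 2))) = inner v v / (2 * L) by field; lra.
  have : inner v v / (2 * L) <= thr pk - thr xm.
    have E2 : L / 2 * (- (/ L * - (/ L * inner v v))) = inner v v / (2 * L) by field; lra.
    have E3 : - (/ L * inner v v) = - (inner v v / L) by field; lra.
    rewrite -/v in H2. have E4 : L / 2 * - - (/ L * (/ L * inner v v)) = inner v v / (2 * L) by field; lra. have E5 : / L * inner v v = 2 * (inner v v / (2 * L)) by field; lra. lra.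
  move=> H3. have := Rmult_le_compat_l (2 * L) _ _ ltac:(lra) H3.
  have -> : 2 * L * (inner v v / (2 * L)) = inner v v by field; lra. by [].
apply norm_le_of_sq.
  apply Rmult_le_pos; [apply Rmult_le_pos; [lra|apply sqrt_pos]|apply Rlt_le, exp_pos].
have -> : (2 * sqrt (L * C) * exp (- (INR k / 2) * sqrt (kappa / L))) ^ 2 =
   4 * (L * C) * exp (- INR k * sqrt (kappa / L)).
  have -> : exp (- INR k * sqrt (kappa / L)) = exp (- (INR k / 2) * sqrt (kappa / L)) * exp (- (INR k / 2) * sqrt (kappa / L)).
    rewrite -exp_plus. f_equal. field.
  have Hs := sqrt_sqrt (L * C) ltac:(apply Rmult_le_pos; [lra|exact HC0]).
  have sqL : forall a b : R, (2 * a * b) ^ 2 = 4 * (a * a) * (b * b) by move=> a b; ring.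
  rewrite sqL Hs. reflexivity.
have := Rmult_le_compat_l _ _ _ (Rmult_le_pos 2 C ltac:(lra) HC0) Hee.
have HLC : 0 <= L * C by apply Rmult_le_pos; [lra|exact HC0].
move=> H4. have : 4 * (L * C) * e <= 4 * (L * C) * exp (- INR k * sqrt (kappa / L)).
  apply Rmult_le_compat_l => //. lra.
move=> H5. have : 2 * L * (thr pk - thr xm) <= 2 * L * (2 * e * C) by apply Rmult_le_compat_l; lra.
move=> H6. have E7 : 2 * L * (2 * e * C) = 4 * (L * C) * e by ring. lra.
Qed.
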